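(* Let $V$ be a fixed real-valued score function, $X_1,\dots,X_{n+1}\in\mathbb R^p$, calibration scores $V_1\le V_2\le\dots\le V_n$ (indexed in increasing order), and $H:\mathbb R^p\times\mathbb R^p\to[0,1]$ a localizer with $H(x,x)=1$; put $H_{ij}=H(X_i,X_j)$ and $p^H_{ij}=H_{ij}/\sum_{k=1}^{n+1}H_{ik}$. For $v\in\mathbb R\cup\{\pm\infty\}$ let $\hat{\mathcal F}_i(v)=\sum_{j=1}^{n}p^H_{ij}\delta_{V_j}+p^H_{i,n+1}\delta_v$, and $\hat{\mathcal F}=\sum_{j=1}^np^H_{n+1,j}\delta_{V_j}+p^H_{n+1,n+1}\delta_{+\infty}$. Fix $\alpha\in(0,1)$, let $\Gamma=\{\sum_{k\in I}p^H_{ik}: i\in\{1,\dots,n+1\},\ I\subseteq\{1,\dots,n+1\}\}$, and for each $v$ let $\tilde\alpha(v)$ be the smallest $\tilde\alpha\in\Gamma$ with $\frac{1}{n+1}\sum_{i=1}^{n+1}\mathbb 1\{V_i\le Q(\tilde\alpha;\hat{\mathcal F}_i(v))\}\ge\alpha$ (with $V_{n+1}=v$ in this sum); set $C_V(X_{n+1})=\{v: v\le Q(\tilde\alpha(v);\hat{\mathcal F})\}$. Let $\overline V_0=-\infty$, $\overline V_i=V_i$ for $1\le i\le n$, $\overline V_{n+1}=+\infty$. For $i=1,\dots,n+1$ let $\ell(i)=\max\{i'\in\{1,\dots,n\}: V_{i'}<\overline V_i\}$ (with $\max\emptyset=0$), $\theta_i=\sum_{j=1}^{\ell(i)}p^H_{ij}$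 and $\tilde\theta_i=\sum_{j=1}^{\ell(i)}p^H_{n+1,j}$ (both $0$ if $\ell(i)=0$). For $k=1,\dots,n+1$ let $$S(k)=\frac{1}{n+1}\sum_{i=1}^{n}\mathbb 1\{V_i\le Q(\tilde\theta_k;\hat{\mathcal F}_i(\overline V_{\ell(k)}))\}.$$ Then: 1. If $k^*$ is the largest index $k\in\{1,\dots,n+1\}$ with $S(k)<\alpha$, then $\{v: v\le\overline V_{k^*}\}$ is the closure of $C_V(X_{n+1})$. 2. Partition the calibration indices $\{1,\dots,n\}$ into $A_1=\{i:p^H_{i,n+1}+\theta_i<\tilde\theta_i\}$, $A_2=\{i:\theta_i\ge\tilde\theta_i\}$, $A_3=\{i: p^H_{i,n+1}+\theta_i\ge\tilde\theta_i,\ \theta_i<\tilde\theta_i\}$. Then for every $k=1,\dots,n+1$, $$S(k)=\frac{1}{n+1}\Big(\sum_{i\in A_1}\mathbb 1\{\theta_i+p^H_{i,n+1}<\tilde\theta_k\}+\sum_{i\in A_2}\mathbb 1\{\theta_i<\tilde\theta_k\}+\sum_{i\in A_3}\mathbb 1\{\ell(i)<\ell(k)\}\Big).$$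
   Context: For a distribution $\mathcal F$ on $\mathbb R\cup\{\pm\infty\}$, $Q(\alpha;\mathcal F)=\inf\{t:\mathbb P_{T\sim\mathcal F}(T\le t)\ge\alpha\}$; $\delta_v$ is the point mass at $v$. *)

(* Defs.v *)
From HB Require Import structures.
From mathcomp Require Import all_boot all_order all_algebra.
From mathcomp Require Import all_classical all_reals all_analysis.
Set Implicit Arguments. Unset Strict Implicit. Unset Printing Implicit Defensive.
Import Order.TTheory GRing.Theory Num.Theory.
Local Open Scope classical_set_scope.
Local Open Scope ring_scope.

(* Indices are 1-based nats, matching the paper: calibration points 1..n,
   test point n+1. *)

Section Defs.
Variables (R : realType) (p n : nat).
Variables (H : 'rV[R]_p -> 'rV[R]_p -> R) (X : nat -> 'rV[R]_p) (V : nat -> R).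

(* A finitely supported distribution on R ∪ {±oo}: list of (weight, atom). *)
Definition cdf (F : seq (R * \bar R)) (t : \bar R) : R :=
  \sum_(wa <- F | (wa.2 <= t)%E) wa.1.

Definition Qtl (a : R) (F : seq (R * \bar R)) : \bar R :=
  ereal_inf [set t : \bar R | a <= cdf F t].

Definition Hm (i j : nat) : R := H (X i) (X j).

Definition pH (i j : nat) : R := Hm i j / \sum_(1 <= k < n.+2) Hm i k.

Definition Fi (i : nat) (v : \bar R) : seq (R * \bar R) :=
  [seq (pH i j, (V j)%:E) | j <- iota 1 n] ++ [:: (pH i n.+1, v)].

Definition Fhat : seq (R * \bar R) :=
  [seq (pH n.+1 j, (V j)%:E) | j <- iota 1 n] ++ [:: (pH n.+1 n.+1, +oo%E)].

Definition Gamma : set R :=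
  [set g | exists i : nat, (1 <= i <= n.+1)%N /\
     exists I : nat -> bool, g = \sum_(1 <= k < n.+2 | I k) pH i k].

Definition Vv (v : R) (i : nat) : R := if i == n.+1 then v else V i.

Definition cover_cond (alpha a : R) (v : R) : Prop :=
  alpha <= (n.+1)%:R^-1 *
    (\sum_(1 <= i < n.+2) (((Vv v i)%:E <= Qtl a (Fi i v%:E))%E : nat))%:R.

Definition is_alpha_tilde (alpha : R) (v : R) (a : R) : Prop :=
  Gamma a /\ cover_cond alpha a v /\
  (forall b, Gamma b -> cover_cond alpha b v -> a <= b).

Definition CV (alpha : R) : set R :=
  [set v : R | exists a, is_alpha_tilde alpha v a /\ (v%:E <= Qtl a Fhat)%E].

Definition Vbar (i : nat) : \bar R :=
  if i == 0%N then -oo%E else if (i <= n)%N then (V i)%:E else +oo%E.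

Definition ell (i : nat) : nat :=
  \max_(1 <= i' < n.+1 | ((V i')%:E < Vbar i)%E) i'.

Definition theta (i : nat) : R := \sum_(1 <= j < (ell i).+1) pH i j.
Definition thetat (i : nat) : R := \sum_(1 <= j < (ell i).+1) pH n.+1 j.

Definition Sk (k : nat) : R :=
  (n.+1)%:R^-1 *
    (\sum_(1 <= i < n.+1)
        (((V i)%:E <= Qtl (thetat k) (Fi i (Vbar (ell k))))%E : nat))%:R.

Definition A1 (i : nat) : bool := pH i n.+1 + theta i < thetat i.
Definition A2 (i : nat) : bool := thetat i <= theta i.
Definition A3 (i : nat) : bool := (thetat i <= pH i n.+1 + theta i) && (theta i < thetat i).

End Defs.

(* Main.v *)
Require Import Defs.
From HB Require Import structures.
From mathcomp Require Import all_boot all_order all_algebra.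
From mathcomp Require Import all_classical all_reals all_analysis.
From mathcomp Require Import lra.
Import Order.TTheory GRing.Theory Num.Theory.
Import numFieldTopology.Exports numFieldNormedType.Exports.
Local Open Scope classical_set_scope.
Local Open Scope ring_scope.

Lemma sum_le_filter (R : realType) (T : eqType) (r : seq T) (P Q : pred T) (f : T -> R) :
  (forall w, w \in r -> 0 <= f w) -> (forall w, w \in r -> P w -> Q w) ->
  \sum_(w <- r | P w) f w <= \sum_(w <- r | Q w) f w.
Proof.
move=> f0 PQ; rewrite big_mkcond [X in _ <= X]big_mkcond !big_seq.
apply: ler_sum => w hw; case: (boolP (P w)) => hp; first by rewrite (PQ w hw hp).
by case: (Q w) => //; exact: f0.
Qed.

Lemma thr_exists (R : realType) (F : seq (R * \bar R)) (x : R) :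
  exists t : \bar R, (t < x%:E)%E /\
    forall wa, wa \in F -> ((wa.2 <= t)%E = (wa.2 < x%:E)%E).
Proof.
elim: F => [|wa F [t [tx ht]]]; first by exists -oo%E; split => //; rewrite ltNye.
case: (boolP (wa.2 < x%:E)%E) => hw.
  exists (Order.max t wa.2); split; first by rewrite gt_max tx hw.
  move=> w; rewrite inE => /orP [/eqP -> | hin]; first by rewrite le_max lexx orbT hw.
  rewrite le_max ht //; case: (ltP w.2 x%:E) => //= hwx.
  by apply/negbTE; rewrite -ltNge; exact: lt_le_trans hw hwx.
exists t; split => //.
move=> w; rewrite inE => /orP [/eqP -> | hin]; last exact: ht.
rewrite (negbTE hw); apply/negbTE; rewrite -ltNge; rewrite -leNgt in hw.
exact: lt_le_trans tx hw.
Qed.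

Lemma QtlP (R : realType) (F : seq (R * \bar R)) (x a : R) :
  (forall wa, wa \in F -> 0 <= wa.1) ->
  ((x%:E <= Qtl a F)%E = (\sum_(wa <- F | (wa.2 < x%:E)%E) wa.1 < a)).
Proof.
move=> F0; apply/idP/idP.
- move=> h; rewrite ltNge; apply/negP => ha.
  have [t [tx ht]] := thr_exists _ F x.
  have ct : Defs.cdf F t = \sum_(wa <- F | (wa.2 < x%:E)%E) wa.1.
    rewrite /Defs.cdf big_seq_cond [RHS]big_seq_cond; apply: eq_bigl => w.
    by case: (boolP (w \in F)) => //= hw; rewrite ht.
  have : (Qtl a F <= t)%E by apply: ereal_inf_lbound; rewrite /= ct.
  move=> /(le_trans h) => xt.
  by move: (lt_le_trans tx xt); rewrite ltxx.
- move=> h; apply/ereal_infP => y /= Sy; rewrite leNgt; apply/negP => yx.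
  have : Defs.cdf F y <= \sum_(wa <- F | (wa.2 < x%:E)%E) wa.1.
    apply: sum_le_filter => // w _ hw; exact: le_lt_trans hw yx.
  move=> /(le_trans Sy) => hh.
  by move: (le_lt_trans hh h); rewrite ltxx.
Qed.

Lemma finite_min (R : realType) (L : seq R) (P : R -> Prop) :
  (forall a, P a -> a \in L) -> (exists a, P a) ->
  exists a, P a /\ forall b, P b -> a <= b.
Proof.
elim: L P => [|x L IH] P hL [a Pa]; first by have := hL a Pa.
case: (pselect (exists b, P b /\ b != x)) => [[b [Pb bx]] | hno].
  have [m [[Pm mx] hm]] : exists m, (P m /\ m != x) /\
      forall c, (P c /\ c != x) -> m <= c.
    apply: (IH (fun c => P c /\ c != x)); last by exists b.
    move=> c [Pc cx]; have := hL c Pc; rewrite inE => /orP [/eqP cx'|//].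
    by rewrite cx' eqxx in cx.
  case: (pselect (P x)) => Px.
    have [xm|mx'] := lerP x m.
      exists x; split => // c Pc; case: (eqVneq c x) => [->|cx] //.
      exact: le_trans xm (hm c (conj Pc cx)).
    exists m; split => // c Pc; case: (eqVneq c x) => [->|cx]; first exact: ltW.
    exact: hm.
  exists m; split => // c Pc; case: (eqVneq c x) => [cx|cx]; last exact: hm.
  by rewrite cx in Pc.
have ax : forall c, P c -> c = x.
  move=> c Pc; case: (eqVneq c x) => // cx; exfalso; apply: hno; by exists c.
exists a; split => // c Pc; by rewrite (ax _ Pc) (ax _ Pa).
Qed.

Fixpoint allbs (m : nat) : seq (seq bool) :=
  if m is m'.+1 then [seq b :: s | b <- [:: true; false], s <- allbs m'] else [:: [::]].

Lemma allbsP (s : seq bool) : s \in allbs (size s).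
Proof.
elim: s => [|b s IH] //=.
rewrite !mem_cat; case: b; first by rewrite (map_f (cons true) IH).
by rewrite (map_f (cons false) IH) orbT.
Qed.

Lemma bool_case (R : realType) (th p ti tt : R) (l L : nat) :
  0 <= p -> ((L <= l)%N -> tt <= ti) -> ((l < L)%N -> ti <= tt) ->
  ((th + (if (L <= l)%N then p else 0) < tt)%R : nat) =
  ((if (p + th < ti)%R then ((th + p < tt)%R : nat) else 0%N) +
   (if (ti <= th)%R then ((th < tt)%R : nat) else 0%N) +
   (if ((ti <= p + th) && (th < ti))%R then ((l < L)%N : nat) else 0%N))%N.
Proof.
move=> p0 h1 h2; case: (leqP L l) => hL.
- have {}h1 := h1 hL.
  have [?|?] := ltrP (p+th) ti; have [?|?] := ltrP th ti;
  have [?|?] := ltrP (th+p) tt; have [?|?] := ltrP th tt; rewrite /= ?addr0 //;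
  try (exfalso; lra).
- have {}h2 := h2 hL; rewrite addr0.
  have [?|?] := ltrP (p+th) ti; have [?|?] := ltrP th ti;
  have [?|?] := ltrP (th+p) tt; have [?|?] := ltrP th tt; rewrite /= //;
  try (exfalso; lra).
Qed.

Section Main.
Variables (R : realType) (p n : nat) (H : 'rV[R]_p -> 'rV[R]_p -> R)
  (X : nat -> 'rV[R]_p) (V : nat -> R).
Hypotheses (H01 : forall x y, 0 <= H x y <= 1) (Hdiag : forall x, H x x = 1)
  (Vsorted : forall i j, (1 <= i)%N -> (i <= j)%N -> (j <= n)%N -> V i <= V j).

Local Notation ph := (pH n H X).
Local Notation ell' := (ell n V).
Local Notation Vb := (Vbar n V).

Lemma pH_ge0 i j : 0 <= ph i j.
Proof.
rewrite /pH divr_ge0 //; first by case/andP: (H01 (X i) (X j)).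
by apply: sumr_ge0 => k _; rewrite /Hm; case/andP: (H01 (X i) (X k)).
Qed.

Lemma den_split i : (1 <= i <= n.+1)%N ->
  \sum_(1 <= k < n.+2) Hm H X i k =
  1 + \sum_(k <- index_iota 1 n.+2 | k != i) Hm H X i k.
Proof.
move=> hi; rewrite (bigD1_seq i).
- by rewrite /Hm Hdiag.
- by rewrite mem_index_iota ltnS.
- exact: (iota_uniq 1 n.+1).
Qed.

Lemma den_pos i : (1 <= i <= n.+1)%N -> 0 < \sum_(1 <= k < n.+2) Hm H X i k.
Proof.
move=> hi; rewrite den_split //.
have : 0 <= \sum_(k <- index_iota 1 n.+2 | k != i) Hm H X i k.
  by apply: sumr_ge0 => k _; rewrite /Hm; case/andP: (H01 (X i) (X k)).
lra.
Qed.

Lemma pH_sum i : (1 <= i <= n.+1)%N -> \sum_(1 <= j < n.+2) ph i j = 1.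
Proof.
move=> hi; rewrite /pH -mulr_suml mulfV //; have := den_pos i hi; rewrite lt0r => /andP[] //.
Qed.

Lemma pH_pos i : (1 <= i <= n.+1)%N -> 0 < ph i i.
Proof.
move=> hi; rewrite /pH /Hm Hdiag; apply: divr_gt0 => //; exact: den_pos i hi.
Qed.

Lemma bigmax_ex (r : seq nat) (P : pred nat) m : (0 < m)%N ->
  (m <= \max_(i <- r | P i) i)%N -> exists i, i \in r /\ P i /\ (m <= i)%N.
Proof.
move=> m0; elim: r => [|x r IH]; first by rewrite big_nil leqn0 => /eqP h; rewrite h in m0.
rewrite big_cons; case: ifP => Px.
  rewrite leq_max => /orP [h|h]; first by exists x; rewrite inE eqxx.
  by have [i [ir [Pi mi]]] := IH h; exists i; rewrite inE ir orbT.
by move=> h; have [i [ir [Pi mi]]] := IH h; exists i; rewrite inE ir orbT.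
Qed.

Definition mx (w : \bar R) : nat := \max_(1 <= i < n.+1 | ((V i)%:E < w)%E) i.

Lemma mx_le w : (mx w <= n)%N.
Proof.
apply/bigmax_leqP_seq => i; rewrite mem_index_iota => /andP [_ h] _.
by rewrite -ltnS.
Qed.

Lemma mxP w j : (1 <= j <= n)%N -> ((V j)%:E < w)%E = (j <= mx w)%N.
Proof.
move=> /andP [j1 jn]; apply/idP/idP => h.
  apply: (leq_bigmax_seq (F := fun i => i)) => //.
  by rewrite mem_index_iota j1 ltnS.
have [i [ir [Pi ji]]] := bigmax_ex _ _ _ j1 h.
move: ir; rewrite mem_index_iota ltnS => /andP [_ iN].
apply: le_lt_trans Pi; rewrite lee_fin; exact: Vsorted.
Qed.

Lemma ell_mx k : ell' k = mx (Vb k).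
Proof. by []. Qed.

Lemma Vbar_in i : (1 <= i <= n)%N -> Vb i = (V i)%:E.
Proof.
by move=> /andP [i1 iN]; rewrite /Vbar; case: i i1 iN => // i _ ->.
Qed.

Lemma Vbar0 : Vb 0 = -oo%E.
Proof. by []. Qed.

Lemma prefix_sum (f : nat -> R) L : (L <= n)%N ->
  \sum_(1 <= j < L.+1) f j = \sum_(1 <= j < n.+1 | (j <= L)%N) f j.
Proof.
move=> hL; rewrite (big_nat_widen _ _ _ _ _ (_ : L.+1 <= n.+1)%N) //.
Qed.

Lemma sum_range_eq (P Q : pred nat) (f : nat -> R) :
  (forall j, (1 <= j <= n)%N -> P j = Q j) ->
  \sum_(1 <= j < n.+1 | P j) f j = \sum_(1 <= j < n.+1 | Q j) f j.
Proof.
move=> PQ; rewrite big_seq_cond [RHS]big_seq_cond; apply: eq_bigl => j.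
rewrite mem_index_iota ltnS; case: (boolP (1 <= j <= n)%N) => //= h.
exact: PQ.
Qed.

Lemma sum_range_le (P Q : pred nat) (f : nat -> R) :
  (forall j, 0 <= f j) ->
  (forall j, (1 <= j <= n)%N -> P j -> Q j) ->
  \sum_(1 <= j < n.+1 | P j) f j <= \sum_(1 <= j < n.+1 | Q j) f j.
Proof.
move=> f0 PQ; apply: sum_le_filter => // j; rewrite mem_index_iota ltnS.
exact: PQ.
Qed.

Lemma prefix_mono (f : nat -> R) a b : (forall j, 0 <= f j) -> (a <= b)%N ->
  \sum_(1 <= j < a.+1) f j <= \sum_(1 <= j < b.+1) f j.
Proof.
move=> f0 ab; rewrite [X in _ <= X](@big_cat_nat _ _ _ a.+1 1 b.+1) //=.
by rewrite lerDl; apply: sumr_ge0.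
Qed.


Definition Mi (i : nat) (w : \bar R) : R :=
  \sum_(1 <= j < n.+1 | V j < V i) ph i j +
  (if (w < (V i)%:E)%E then ph i n.+1 else 0).
Definition mv (v : R) : R := \sum_(1 <= j < n.+1 | V j < v) ph n.+1 j.

Lemma mass_Fi i w x :
  \sum_(wa <- Fi n H X V i w | (wa.2 < x%:E)%E) wa.1 =
  \sum_(1 <= j < n.+1 | V j < x) ph i j + (if (w < x%:E)%E then ph i n.+1 else 0).
Proof.
rewrite /Fi big_cat big_map big_cons big_nil /= addr0; congr (_ + _).
rewrite /index_iota subSS subn0; apply: eq_bigl => j /=; by rewrite lte_fin.
Qed.

Lemma Fi_ge0 i w : forall wa, wa \in Fi n H X V i w -> 0 <= wa.1.
Proof.
move=> wa; rewrite mem_cat => /orP [/mapP [j _ ->] | ]; first exact: pH_ge0.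
by rewrite inE => /eqP ->; exact: pH_ge0.
Qed.

Lemma QFi i w x a : (x%:E <= Qtl a (Fi n H X V i w))%E =
  (\sum_(1 <= j < n.+1 | V j < x) ph i j + (if (w < x%:E)%E then ph i n.+1 else 0) < a).
Proof. by rewrite QtlP ?mass_Fi //; exact: Fi_ge0. Qed.

Lemma QFhat v a : (v%:E <= Qtl a (Fhat n H X V))%E = (mv v < a).
Proof.
rewrite QtlP; last first.
  move=> wa; rewrite mem_cat => /orP [/mapP [j _ ->] | ]; first exact: pH_ge0.
  by rewrite inE => /eqP ->; exact: pH_ge0.
congr (_ < _); rewrite /Fhat big_cat big_map big_cons big_nil /=.
rewrite addr0.
rewrite /mv /index_iota subSS subn0; apply: eq_bigl => j /=; by rewrite lte_fin.
Qed.

Lemma Mi_theta i : (1 <= i <= n)%N ->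
  \sum_(1 <= j < n.+1 | V j < V i) ph i j = theta n H X V i.
Proof.
move=> hi; rewrite /theta ell_mx (prefix_sum _ _ (mx_le _)).
apply: sum_range_eq => j hj; by rewrite -mxP // Vbar_in // lte_fin.
Qed.

Lemma part2 k : (1 <= k <= n.+1)%N ->
     Sk n H X V k =
     (n.+1)%:R^-1 *
       ((\sum_(1 <= i < n.+1 | A1 n H X V i)
           ((theta n H X V i + pH n H X i n.+1 < thetat n H X V k)%R : nat))%:R
      + (\sum_(1 <= i < n.+1 | A2 n H X V i)
           ((theta n H X V i < thetat n H X V k)%R : nat))%:R
      + (\sum_(1 <= i < n.+1 | A3 n H X V i)
           ((ell n V i < ell n V k)%N : nat))%:R).
Proof.
move=> hk; rewrite /Sk -!natrD; congr (_ * _%:R).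
rewrite [\sum_(1 <= i < n.+1 | A1 _ _ _ _ i) _]big_mkcond.
rewrite [\sum_(1 <= i < n.+1 | A2 _ _ _ _ i) _]big_mkcond.
rewrite [\sum_(1 <= i < n.+1 | A3 _ _ _ _ i) _]big_mkcond.
rewrite -!big_split /=; apply: eq_big_nat => i /andP [i1 iN].
have hi : (1 <= i <= n)%N by rewrite i1 -ltnS.
rewrite QFi (Mi_theta i hi) /A1 /A2 /A3.
have th0 : 0 <= theta n H X V i by apply: sumr_ge0 => j _; exact: pH_ge0.
case: (ell' k =P 0%N) => hL.
  have ht0 : thetat n H X V k = 0 by rewrite /thetat hL big_geq.
  have e1 : (theta n H X V i + ph i n.+1 < 0) = false.
    by apply/negbTE; rewrite -leNgt addr_ge0 // pH_ge0.
  have e2 : (theta n H X V i < 0) = false by apply/negbTE; rewrite -leNgt.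
  rewrite hL Vbar0 ltNye /= ht0 e1 e2.
  by case: ifP; case: ifP; case: ifP.
have hL' : (0 < ell' k)%N by rewrite lt0n; apply/eqP.
have hLn : (1 <= ell' k <= n)%N by rewrite hL' mx_le.
have e : ((Vb (ell' k)) < (V i)%:E)%E = (ell' k <= ell' i)%N.
  by rewrite (Vbar_in _ hLn) -(Vbar_in _ hi) (ell_mx i) (mxP _ _ hLn).
rewrite e; apply: bool_case; first exact: pH_ge0.
  by move=> h; apply: prefix_mono => // j; exact: pH_ge0.
by move=> h; apply: prefix_mono => [j|]; [exact: pH_ge0 | exact: ltnW].
Qed.


Definition Tn (v : R) : nat := \sum_(1 <= i < n.+1) ((Mi i v%:E < mv v)%R : nat).
Definition cnt (a v : R) : nat :=
  (\sum_(1 <= i < n.+1) ((Mi i v%:E < a)%R : nat) + ((mv v < a)%R : nat))%N.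
Definition Sn (k : nat) : nat := \sum_(1 <= i < n.+1)
        (((V i)%:E <= Qtl (thetat n H X V k) (Fi n H X V i (Vb (ell' k))))%E : nat).

Lemma SkE k : Sk n H X V k = (n.+1)%:R^-1 * (Sn k)%:R.
Proof. by []. Qed.

Lemma cnt_eq a v : \sum_(1 <= i < n.+2)
   (((Vv n V v i)%:E <= Qtl a (Fi n H X V i v%:E))%E : nat) = cnt a v.
Proof.
rewrite big_nat_recr //=; congr addn.
  apply: eq_big_nat => i /andP [i1 iN].
  by rewrite /Vv (_ : (i == n.+1) = false) ?QFi //; rewrite ltn_eqF.
by rewrite /Vv eqxx QFi ltxx addr0.
Qed.

Lemma ind_mono (x a b : R) : a <= b -> (((x < a)%R : nat) <= ((x < b)%R : nat))%N.
Proof.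
move=> ab; case: (boolP (x < a)) => // h; by rewrite (lt_le_trans h ab).
Qed.

Lemma cnt_mono a b v : a <= b -> (cnt a v <= cnt b v)%N.
Proof.
move=> ab; apply: leq_add; last exact: ind_mono.
by apply: leq_sum => i _; exact: ind_mono.
Qed.

Lemma cnt_mv v : cnt (mv v) v = Tn v.
Proof. by rewrite /cnt ltxx addn0. Qed.

Lemma Gamma_mv v : Gamma n H X (mv v).
Proof.
exists n.+1; split; first by rewrite ltn0Sn leqnn.
exists (fun k => (V k < v) && (k < n.+1)%N).
by rewrite /mv (big_nat_widen _ _ _ _ _ (leqnSn n.+1)).
Qed.

Lemma Gamma_1 : Gamma n H X 1.
Proof.
exists n.+1; split; first by rewrite ltn0Sn leqnn.
exists (fun _ => true); by rewrite pH_sum // ltn0Sn leqnn.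
Qed.

Lemma Mi_lt1 i w : (1 <= i <= n)%N -> Mi i w < 1.
Proof.
move=> /andP [i1 iN].
have hi : (1 <= i <= n.+1)%N by rewrite i1 ltnW.
have u : uniq (index_iota 1 n.+1) by rewrite /index_iota iota_uniq.
have m : i \in index_iota 1 n.+1 by rewrite mem_index_iota i1 ltnS.
have s : ph i i + \sum_(1 <= j < n.+1 | j != i) ph i j + ph i n.+1 = 1.
  by rewrite -(bigD1_seq _ m u) -big_nat_recr // pH_sum.
have le1 : \sum_(1 <= j < n.+1 | V j < V i) ph i j <=
           \sum_(j <- index_iota 1 n.+1 | j != i) ph i j.
  apply: sum_le_filter => [j _|j _ hj]; first exact: pH_ge0.
  by case: (eqVneq j i) => // e; rewrite e ltxx in hj.
have pp := pH_pos i hi.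
have h2 : (if (w < (V i)%:E)%E then ph i n.+1 else 0) <= ph i n.+1.
  by case: ifP => _ //; exact: pH_ge0.
rewrite /Mi; lra.
Qed.

Lemma mv_lt1 v : mv v < 1.
Proof.
have hi : (1 <= n.+1 <= n.+1)%N by rewrite ltn0Sn leqnn.
have s : \sum_(1 <= j < n.+1) ph n.+1 j + ph n.+1 n.+1 = 1.
  by rewrite -big_nat_recr // pH_sum.
have le1 : mv v <= \sum_(1 <= j < n.+1) ph n.+1 j.
  apply: sum_le_filter => [j _|j _ hj] //; exact: pH_ge0.
have pp := pH_pos n.+1 hi.
lra.
Qed.

Lemma cover1 alpha v : alpha < 1 -> cover_cond n H X V alpha 1 v.
Proof.
move=> a1; rewrite /cover_cond cnt_eq /cnt mv_lt1.
rewrite (eq_big_nat _ _ (F2 := fun _ => 1%N)); last first.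
  by move=> i /andP [i1 iN]; rewrite Mi_lt1 // i1 -ltnS.
rewrite sum_nat_const_nat subSS subn0 muln1 addn1 mulVf ?pnatr_eq0 //.
exact: ltW.
Qed.

Definition GL : seq R := [seq \sum_(1 <= k < n.+2 | nth false s k) ph i k
                           | i <- iota 1 n.+1, s <- allbs n.+2].

Lemma Gamma_GL b : Gamma n H X b -> b \in GL.
Proof.
move=> [i [hi [I ->]]].
have e : \sum_(1 <= k < n.+2 | I k) ph i k =
         \sum_(1 <= k < n.+2 | nth false (mkseq I n.+2) k) ph i k.
  rewrite big_seq_cond [RHS]big_seq_cond; apply: eq_bigl => k.
  rewrite mem_index_iota; case: (boolP (1 <= k < n.+2)%N) => //= /andP [_ hk].
  by rewrite nth_mkseq.
rewrite e /GL; apply: (allpairs_f (fun i s => \sum_(1 <= k < n.+2 | nth false s k) ph i k)).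
  by rewrite mem_iota add1n.
by have := allbsP (mkseq I n.+2); rewrite size_mkseq.
Qed.

Lemma CV_iff alpha v : 0 < alpha < 1 ->
  (CV n H X V alpha v <-> (n.+1)%:R^-1 * (Tn v)%:R < alpha).
Proof.
move=> /andP [a0 a1]; split.
- move=> [a [[Ga [cov minA]] hQ]]; rewrite QFhat in hQ.
  rewrite ltNge; apply/negP => h.
  have c' : cover_cond n H X V alpha (mv v) v by rewrite /cover_cond cnt_eq cnt_mv.
  by have := minA _ (Gamma_mv v) c'; rewrite leNgt hQ.
- move=> h.
  have [a [[Ga ca] ma]] := finite_min _ GL
    (fun b => Gamma n H X b /\ cover_cond n H X V alpha b v)
    (fun b hb => Gamma_GL b hb.1) (ex_intro _ 1 (conj Gamma_1 (cover1 alpha v a1))).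
  exists a; split; first by split => //; split => // b Gb cb; exact: ma b (conj Gb cb).
  rewrite QFhat ltNge; apply/negP => am.
  move: ca; rewrite /cover_cond cnt_eq => ca.
  have : alpha <= (n.+1)%:R^-1 * (Tn v)%:R.
    apply: le_trans ca _; rewrite -cnt_mv; apply: ler_wpM2l.
      by rewrite invr_ge0 ler0n.
    by rewrite ler_nat; exact: cnt_mono.
  by rewrite leNgt h.
Qed.


Lemma mv_le_thetat v k : (v%:E < Vb k)%E -> mv v <= thetat n H X V k.
Proof.
move=> hv; rewrite /thetat ell_mx (prefix_sum _ _ (mx_le _)).
apply: sum_range_le => [j|j hj hvj]; first exact: pH_ge0.
rewrite -mxP //; apply: lt_trans hv; by rewrite lte_fin.
Qed.

Lemma part_i v k : (1 <= k <= n.+1)%N -> (v%:E < Vb k)%E -> (Tn v <= Sn k)%N.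
Proof.
move=> hk hvk; rewrite /Tn /Sn big_seq [X in (_ <= X)%N]big_seq.
apply: leq_sum => i; rewrite mem_index_iota ltnS => /andP [i1 iN].
rewrite QFi /Mi.
case: (boolP (_ < mv v)) => // h.
have hm := mv_le_thetat v k hvk.
have s0 : 0 <= \sum_(1 <= j < n.+1 | V j < V i) ph i j.
  by apply: sumr_ge0 => j _; exact: pH_ge0.
case: (ell' k =P 0%N) => hL.
  have t0 : thetat n H X V k = 0 by rewrite /thetat hL big_geq.
  have i0 : 0 <= (if (v%:E < (V i)%:E)%E then ph i n.+1 else 0).
    by case: ifP => _ //; exact: pH_ge0.
  have := lt_le_trans h hm; rewrite t0 => hh.
  by have := addr_ge0 s0 i0; rewrite leNgt hh.
have hL' : (0 < ell' k)%N by rewrite lt0n; apply/eqP.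
have hLn : (1 <= ell' k <= n)%N by rewrite hL' mx_le.
have key : ((Vb (ell' k)) < (V i)%:E)%E -> (v%:E < (V i)%:E)%E.
  rewrite (Vbar_in _ hLn) lte_fin => hlt.
  have : ~~ (i <= ell' k)%N.
    apply/negP => hik; have := Vsorted i (ell' k) i1 hik (mx_le _).
    by rewrite leNgt hlt.
  rewrite (ell_mx k) -mxP ?i1 ?iN // -leNgt => hb; exact: lt_le_trans hvk hb.
have e1 : \sum_(1 <= j < n.+1 | V j < V i) ph i j +
            (if (Vb (ell' k) < (V i)%:E)%E then ph i n.+1 else 0) <=
          \sum_(1 <= j < n.+1 | V j < V i) ph i j +
            (if (v%:E < (V i)%:E)%E then ph i n.+1 else 0).
  rewrite lerD2l; case: ifP => h1; first by rewrite key.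
  by case: ifP => _ //; exact: pH_ge0.
by rewrite (le_lt_trans e1 (lt_le_trans h hm)).
Qed.

Lemma part_ii v kstar : (1 <= kstar <= n.+1)%N -> (Vb kstar < v%:E)%E ->
  exists k, (kstar < k <= n.+1)%N /\ (Sn k <= Tn v)%N.
Proof.
move=> /andP [k1 kN] hv.
have ks : (kstar <= n)%N.
  case: (leqP kstar n) => // hks; exfalso.
  move: hv; rewrite /Vbar; case: kstar k1 kN hks => // k _ _ hks.
  by rewrite leqNgt hks /= ltNge leey.
have kin : (1 <= kstar <= n)%N by rewrite k1 ks.
set M := mx v%:E.
have kM : (kstar <= M)%N by rewrite -mxP // -(Vbar_in _ kin).
have Mn : (M <= n)%N := mx_le _.
exists M.+1; split; first by rewrite ltnS kM ltnS.
have F1 : forall j, (1 <= j <= n)%N -> (j <= ell' M.+1)%N -> ((V j)%:E < v%:E)%E.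
  move=> j hj hjl; rewrite mxP //.
  case: (leqP j M) => // hMj; exfalso.
  have hM1 : (1 <= M.+1 <= n)%N by case/andP: hj => _ jn; rewrite ltn0Sn (leq_trans hMj jn).
  move: hjl; rewrite (ell_mx M.+1) -mxP // (Vbar_in _ hM1) lte_fin.
  case/andP: hj => j1 jn.
  by rewrite ltNge (Vsorted _ _ (ltn0Sn M) hMj jn).
have ht : thetat n H X V M.+1 <= mv v.
  rewrite /thetat (ell_mx M.+1) (prefix_sum _ _ (mx_le _)).
  apply: sum_range_le => [j|j hj hjl]; first exact: pH_ge0.
  by rewrite -lte_fin; apply: F1.
have key : forall i, (v%:E < (V i)%:E)%E -> ((Vb (ell' M.+1)) < (V i)%:E)%E.
  move=> i hvi; case: (ell' M.+1 =P 0%N) => hL; first by rewrite hL Vbar0 ltNye.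
  have hLn : (1 <= ell' M.+1 <= n)%N by rewrite lt0n mx_le andbT; apply/eqP.
  rewrite (Vbar_in _ hLn); apply: lt_trans hvi; exact: F1.
rewrite /Tn /Sn big_seq [X in (_ <= X)%N]big_seq.
apply: leq_sum => i; rewrite mem_index_iota ltnS => /andP [i1 iN].
rewrite QFi /Mi.
case: (boolP (_ < thetat _ _ _ _ _)) => // h.
have e1 : \sum_(1 <= j < n.+1 | V j < V i) ph i j +
            (if (v%:E < (V i)%:E)%E then ph i n.+1 else 0) <=
          \sum_(1 <= j < n.+1 | V j < V i) ph i j +
            (if (Vb (ell' M.+1) < (V i)%:E)%E then ph i n.+1 else 0).
  rewrite lerD2l; case: ifP => h1; first by rewrite key.
  by case: ifP => _ //; exact: pH_ge0.
by rewrite (le_lt_trans e1 (lt_le_trans h ht)).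
Qed.

Lemma part1 alpha kstar : 0 < alpha < 1 -> (1 <= kstar <= n.+1)%N ->
  Sk n H X V kstar < alpha ->
  (forall k : nat, (kstar < k <= n.+1)%N -> ~ (Sk n H X V k < alpha)) ->
  [set v : R | ((v%:E) <= Vb kstar)%E] = closure (CV n H X V alpha).
Proof.
move=> ha hk hS hmax.
have sub1 : forall v, (v%:E < Vb kstar)%E -> CV n H X V alpha v.
  move=> v hv; apply/(CV_iff alpha v ha); apply: le_lt_trans hS.
  rewrite SkE; apply: ler_wpM2l; first by rewrite invr_ge0 ler0n.
  by rewrite ler_nat; exact: part_i.
have sub2 : forall v, CV n H X V alpha v -> (v%:E <= Vb kstar)%E.
  move=> v hv; rewrite leNgt; apply/negP => hlt.
  have [k [hk' hSk]] := part_ii v kstar hk hlt.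
  apply: (hmax k hk'); move/(CV_iff alpha v ha): hv => hT.
  apply: le_lt_trans hT; rewrite SkE; apply: ler_wpM2l; first by rewrite invr_ge0 ler0n.
  by rewrite ler_nat.
case/andP: hk => k1 kN.
case: (leqP kstar n) => hkn.
  have kin : (1 <= kstar <= n)%N by rewrite k1 hkn.
  have hV : Vb kstar = (V kstar)%:E by rewrite Vbar_in.
  have -> : [set v : R | (v%:E <= Vb kstar)%E] = [set x | x <= V kstar].
    by apply/seteqP; split => x /=; rewrite hV lee_fin.
  have cl : closed [set x : R | x <= V kstar].
    rewrite -closure_lt; exact: closed_closure.
  apply/seteqP; split.
    rewrite -closure_lt; apply: closureS => x /= hx; apply: sub1.
    by rewrite hV lte_fin.
  have -> : [set x : R | x <= V kstar] = closure [set x : R | x <= V kstar].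
    exact/closure_id.
  apply: closureS => x /sub2; by rewrite hV lee_fin.
have hV : Vb kstar = +oo%E.
  rewrite /Vbar; case: kstar k1 kN hkn sub1 sub2 hS hmax => // k _ _ hkn _ _ _ _.
  by rewrite leqNgt hkn.
apply/seteqP; split => x _; last by rewrite /= hV leey.
apply: subset_closure; apply: sub1; by rewrite hV ltey.
Qed.

End Main.

Theorem lemma2 (R : realType) (p n : nat)
  (H : 'rV[R]_p -> 'rV[R]_p -> R) (X : nat -> 'rV[R]_p) (V : nat -> R)
  (alpha : R)
  (H01 : forall x y, 0 <= H x y <= 1)
  (Hdiag : forall x, H x x = 1)
  (Vsorted : forall i j, (1 <= i)%N -> (i <= j)%N -> (j <= n)%N -> V i <= V j)
  (alpha01 : 0 < alpha < 1) :
  (forall kstar : nat, (1 <= kstar <= n.+1)%N ->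
     Sk n H X V kstar < alpha ->
     (forall k : nat, (kstar < k <= n.+1)%N -> ~ (Sk n H X V k < alpha)) ->
     [set v : R | ((v%:E) <= Vbar n V kstar)%E] = closure (CV n H X V alpha))
  /\
  (forall k : nat, (1 <= k <= n.+1)%N ->
     Sk n H X V k =
     (n.+1)%:R^-1 *
       ((\sum_(1 <= i < n.+1 | A1 n H X V i)
           ((theta n H X V i + pH n H X i n.+1 < thetat n H X V k)%R : nat))%:R
      + (\sum_(1 <= i < n.+1 | A2 n H X V i)
           ((theta n H X V i < thetat n H X V k)%R : nat))%:R
      + (\sum_(1 <= i < n.+1 | A3 n H X V i)
           ((ell n V i < ell n V k)%N : nat))%:R)).
Proof.
split.
  move=> kstar hk hS hmax; exact: (@part1 R p n H X V H01 Hdiag Vsorted alpha kstar alpha01 hk hS hmax).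
move=> k hk; exact: (@part2 R p n H X V H01 Vsorted k hk).
Qed.
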